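(* For every $d\ge3$, the functions $C_{-1}(u_1,\dots,u_d)=\phi_{-1}^{-1}(\phi_{-1}(u_1)+\cdots+\phi_{-1}(u_d))$ and $C_{-2}(u_1,\dots,u_d)=\phi_{-2}^{-1}(\phi_{-2}(u_1)+\cdots+\phi_{-2}(u_d))$, $u_1,\dots,u_d\in[0,1]$, are valid $d$-dimensional copulas.
   Context: $\phi_{-1}(x)=x-1-\log x$ and $\phi_{-2}(x)=\frac12(x^{-1}+x-2)$ for $x>0$, with $\phi_{-1}(0)=\phi_{-2}(0)=\infty$; each is a strictly decreasing bijection from $[0,1]$ onto $[0,\infty]$, and $\phi_\lambda^{-1}$ denotes its inverse (with $\phi_\lambda^{-1}(\infty)=0$). Explicitly, $\phi_{-1}^{-1}(t)=-\mathfrak{W}_0(-e^{-(t+1)})$ with $\mathfrak{W}_0$ the principal branch of the Lambert W function, and $\phi_{-2}^{-1}(t)=t+1-\sqrt{(t+1)^2-1}$. A $d$-dimensional copula is a joint CDF on $[0,1]^d$ with uniform $[0,1]$ margins. *)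

(* Defs.v *)
From HB Require Import structures.
From mathcomp Require Import all_boot all_order all_algebra.
From mathcomp Require Import all_classical all_reals all_analysis.
Set Implicit Arguments. Unset Strict Implicit. Unset Printing Implicit Defensive.
Import Order.TTheory GRing.Theory Num.Theory.
Local Open Scope ring_scope.

Definition phi_m1 {R : realType} (x : R) : \bar R :=
  if x == 0 then +oo%E else (x - 1 - ln x)%:E.

Definition phi_m2 {R : realType} (x : R) : \bar R :=
  if x == 0 then +oo%E else ((x^-1 + x - 2) / 2)%:E.

Definition phi_inv {R : realType} (phi : R -> \bar R) (t : \bar R) : R :=
  xget 0 [set x : R | 0 <= x <= 1 /\ phi x = t].

Definition archC {R : realType} (phi : R -> \bar R) (d : nat)
    (u : 'I_d -> R) : R :=
  phi_inv phi (\sum_(i < d) phi (u i))%E.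

Definition in_unit_cube {R : realType} (d : nat) (u : 'I_d -> R) : Prop :=
  forall i, 0 <= u i <= 1.

Definition cvolume {R : realType} (d : nat) (C : ('I_d -> R) -> R)
    (a b : 'I_d -> R) : R :=
  \sum_(S : {set 'I_d}) (-1) ^+ (d - #|S|) * C (fun i => if i \in S then b i else a i).

Definition is_copula {R : realType} (d : nat) (C : ('I_d -> R) -> R) : Prop :=
  [/\ (forall u, in_unit_cube u -> (exists i, u i = 0) -> C u = 0),
      (forall u i, in_unit_cube u -> (forall j, j != i -> u j = 1) -> C u = u i)
    & (forall a b, in_unit_cube a -> in_unit_cube b -> (forall i, a i <= b i) ->
         0 <= cvolume C a b)].

(* Main.v *)
Require Import Defs.
From mathcomp Require Import all_boot all_order all_algebra.
From mathcomp Require Import all_classical all_reals all_analysis.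
From HB Require Import structures.
From mathcomp Require Import ring lra zify.
Set Implicit Arguments. Unset Strict Implicit. Unset Printing Implicit Defensive.
Import Order.TTheory GRing.Theory Num.Theory.
Import numFieldNormedType.Exports.

Section Mon.
Variable R : realType.
Local Open Scope classical_set_scope.
Local Open Scope ring_scope.

Fixpoint Mon (D : R -> Prop) (s : R) (n : nat) (f : R -> R) : Prop :=
  (forall x, D x -> 0 <= f x) /\
  match n with
  | 0 => True
  | n'.+1 => exists df : R -> R, (forall x, D x -> is_derive x 1 f (df x)) /\
            Mon D s n' (fun x => s * df x)
  end.

Lemma Mon_ge0 D s n f x : Mon D s n f -> D x -> 0 <= f x.
Proof. by case: n => [[H _]|n [H _]]; apply: H. Qed.

Lemma Mon_S D s n f : Mon D s n.+1 f -> Mon D s n f.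
Proof.
elim: n f => [|n IH] f [H [df [Hd HM]]]; first by split.
by split => //; exists df; split => //; apply: IH.
Qed.

Lemma Mon_weak D s n m f : (m <= n)%N -> Mon D s n f -> Mon D s m f.
Proof.
move=> /subnK <-; elim: (n - m)%N => [|k IH] //= H.
by apply: IH; apply: Mon_S.
Qed.

Lemma Mon_add D s n f g : Mon D s n f -> Mon D s n g -> Mon D s n (fun x => f x + g x).
Proof.
elim: n f g => [|n IH] f g.
  by move=> [Hf _] [Hg _]; split => // x Dx; rewrite addr_ge0 ?Hf ?Hg.
move=> [Hf [df [Hdf Mf]]] [Hg [dg [Hdg Mg]]]; split.
  by move=> x Dx; rewrite addr_ge0 ?Hf ?Hg.
exists (fun x => df x + dg x); split.
  by move=> x Dx; exact: (is_deriveD (Hdf x Dx) (Hdg x Dx)).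
have -> : (fun x => s * (df x + dg x)) = (fun x => s * df x + s * dg x).
  by apply/funext => x; rewrite mulrDr.
exact: IH.
Qed.

Lemma Mon_mul D s n f g : Mon D s n f -> Mon D s n g -> Mon D s n (fun x => f x * g x).
Proof.
elim: n f g => [|n IH] f g.
  by move=> [Hf _] [Hg _]; split => // x Dx; rewrite mulr_ge0 ?Hf ?Hg.
move=> [Hf [df [Hdf Mf]]] [Hg [dg [Hdg Mg]]]; split.
  by move=> x Dx; rewrite mulr_ge0 ?Hf ?Hg.
exists (fun x => f x * dg x + g x * df x); split.
  move=> x Dx; have := @is_deriveM R R f g x 1 (df x) (dg x) (Hdf x Dx) (Hdg x Dx).
  by [].
have -> : (fun x => s * (f x * dg x + g x * df x)) =
          (fun x => (s * df x) * g x + f x * (s * dg x)).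
  by apply: boolp.funext => x /=; ring.
have Mg' : Mon D s n g by apply: Mon_S; split => //; exists dg.
have Mf' : Mon D s n f by apply: Mon_S; split => //; exists df.
by apply: Mon_add; apply: IH.
Qed.

Lemma Mon_comp D E s n g h :
  (forall x, D x -> E (h x)) -> Mon E 1 n g -> Mon D s n h ->
  Mon D s n (fun x => g (h x)).
Proof.
move=> DE; elim: n g h DE => [|n IH] g h DE.
  by move=> [Hg _] [Hh _]; split => // x Dx; apply: Hg; apply: DE.
move=> [Hg [dg [Hdg Mg]]] [Hh [dh [Hdh Mh]]]; split.
  by move=> x Dx; apply: Hg; apply: DE.
exists (fun x => dg (h x) * dh x); split.
  move=> x Dx; have := @is_derive1_comp R g h x (dg (h x)) (dh x) (Hdg _ (DE _ Dx)) (Hdh x Dx).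
  by [].
have -> : (fun x => s * (dg (h x) * dh x)) =
          (fun x => (1 * dg (h x)) * (s * dh x)).
  by apply: boolp.funext => x /=; ring.
apply: Mon_mul => //.
apply: (IH (fun y => 1 * dg y) h) => //.
have : Mon D s n.+1 h by split => //; exists dh.
exact: Mon_S.
Qed.


Lemma is_derive_val (x : R) f (df df' : R) : is_derive x 1 f df -> df = df' -> is_derive x 1 f df'.
Proof. by move=> H <-. Qed.

Lemma Mon_cst D s n (c : R) : 0 <= c -> Mon D s n (fun _ => c).
Proof.
elim: n c => [|n IH] c c0; first by split.
split => //; exists (fun _ => 0); split.
  by move=> x _; exact: (@is_derive_cst R R R c x 1).
have -> : (fun _ : R => s * 0) = (fun _ => 0) by apply: boolp.funext => x /=; rewrite mulr0.
exact: IH.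
Qed.

Lemma Mon_id D n : (forall x, D x -> 0 <= x) -> Mon D 1 n (fun x => x).
Proof.
move=> HD; case: n => [|n]; first by split.
split => //; exists (fun _ => 1); split.
  by move=> x _; exact: (@is_derive_id R R x 1).
apply: Mon_cst; rewrite mulr1; exact: ler01.
Qed.

Definition Dunit (x : R) := 0 < x < 1.
Definition Dpos (x : R) := 0 < x.

Lemma Mon_q n : Mon Dunit 1 n (fun x => (1 - x)^-1).
Proof.
elim: n => [|n IH].
  split => // x /andP[x0 x1]; rewrite invr_ge0 subr_ge0; exact: ltW.
split; first by move=> x /andP[x0 x1]; rewrite invr_ge0 subr_ge0; exact: ltW.
exists (fun x => (1 - x)^-1 * (1 - x)^-1); split.
  move=> x /andP[x0 x1].
  have h1x : 1 - x != 0 by rewrite subr_eq0 eq_sym lt_eqF.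
  have Hd : is_derive x 1 (fun y : R => 1 - y) (0 - 1).
    exact: (is_deriveB (@is_derive_cst R R R 1 x 1) (@is_derive_id R R x 1)).
  apply: is_derive_val (@is_deriveV R (fun y => 1 - y) x _ 1 h1x Hd) _.
  rewrite /GRing.scale /=; field; exact: h1x.
have -> : (fun x : R => 1 * ((1 - x)^-1 * (1 - x)^-1)) =
   (fun x : R => (1 - x)^-1 * (1 - x)^-1) by apply: boolp.funext => x /=; rewrite mul1r.
exact: Mon_mul.
Qed.

Lemma is_derive_shift (f : R -> R) (x h a : R) :
  is_derive (x + h) 1 f a -> is_derive x 1 (fun y => f (y + h)) a.
Proof.
move=> Hf.
have Hg : is_derive x 1 (fun y : R => y + h) (1 + 0).
  exact: (is_deriveD (@is_derive_id R R x 1) (@is_derive_cst R R R h x 1)).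
apply: is_derive_val (@is_derive1_comp R f (fun y => y + h) x a _ Hf Hg) _.
by rewrite addr0 mulr1.
Qed.

Lemma is_derive_cont (f : R -> R) (x a : R) : is_derive x 1 f a -> {for x, continuous f}.
Proof.
by case => Hd _; apply: differentiable_continuous; apply/derivable1_diffP.
Qed.

Lemma Mon_nincr f (x y : R) : Mon Dpos (-1) 1 f -> 0 < x -> x <= y -> f y <= f x.
Proof.
move=> [_ [df [Hd [Hm _]]]] x0 xy.
have dfle : forall z, 0 < z -> df z <= 0.
  by move=> z z0; have := Hm z z0; rewrite mulN1r oppr_ge0.
apply: (@ler0_derive1_le_oo R f 0 (y+1)).
- by move=> z; rewrite in_itv/= => /andP[z0 _]; case: (Hd z z0).
- move=> z; rewrite in_itv/= => /andP[z0 _]; rewrite derive1E.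
  by case: (Hd z z0) => _ ->; apply: dfle.
- by move=> z; rewrite inE/= in_itv/= => /andP[z0 _]; exact: is_derive_cont (Hd z z0).
- by rewrite in_itv/= (lt_le_trans x0 xy) ltrDl ltr01.
- by rewrite in_itv/= x0 (le_lt_trans xy) // ltrDl ltr01.
- exact: xy.
Qed.

Lemma Mon_delta n f h : 0 <= h -> Mon Dpos (-1) n.+1 f ->
  Mon Dpos (-1) n (fun x => f x - f (x + h)).
Proof.
move=> h0; elim: n f => [|n IH] f Mf.
  split => // x x0; rewrite subr_ge0; apply: Mon_nincr Mf x0 _; rewrite lerDl.
  exact: h0.
split.
  move=> x x0; rewrite subr_ge0; apply: Mon_nincr x0 _; last by rewrite lerDl.
  exact: (Mon_weak _ Mf).
case: Mf => [_ [df [Hd Mdf]]].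
exists (fun x => df x - df (x + h)); split.
  move=> x x0; apply: is_deriveB; first exact: Hd.
  apply: is_derive_shift; apply: Hd; rewrite /Dpos; apply: (lt_le_trans x0); rewrite lerDl; exact: h0.
have -> : (fun x => -1 * (df x - df (x + h))) =
   (fun x => (fun y => -1 * df y) x - (fun y => -1 * df y) (x + h)).
  by apply: boolp.funext => x /=; ring.
exact: IH.
Qed.

Definition Pm n f := Mon Dpos (-1) n f /\ 0 <= f 0 /\ (f x @[x --> 0^'+] --> f 0).

Lemma Pm_ge0 n f (x : R) : Pm n f -> 0 <= x -> 0 <= f x.
Proof.
move=> [Mf [f0 _]]; rewrite le_eqVlt => /orP[/eqP <- //|x0].
exact: Mon_ge0 Mf x0.
Qed.

Lemma Pm_S n f : Pm n.+1 f -> Pm n f.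
Proof. by move=> [Mf H]; split => //; exact: Mon_S. Qed.

Lemma Pm_delta n f (h : R) : 0 <= h -> Pm n.+1 f -> Pm n (fun x => f x - f (x + h)).
Proof.
move=> h0 [Mf [f0 fc]]; split; first exact: Mon_delta.
have Hshift : (fun x => f (x + h)) @ 0^'+ --> f (0 + h).
  move: h0; rewrite le_eqVlt => /orP[/eqP <-|hp].
    have -> : (fun x => f (x + 0)) = f by apply: boolp.funext => x; rewrite addr0.
    by rewrite addr0.
  case: Mf => [_ [df [Hd _]]].
  apply: cvg_at_right_filter.
  have : is_derive (0:R) (1:R) (fun y => f (y + h)) (df (0 + h)).
    by apply: is_derive_shift; apply: Hd; rewrite add0r.
  by move/is_derive_cont.
split; last first.
  by apply: cvgB.
rewrite add0r subr_ge0.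
move: h0; rewrite le_eqVlt => /orP[/eqP <-|hp]; first exact: lexx.
have -> : f 0 = lim (f @ 0^'+) by apply/esym/cvg_lim.
apply: limr_ge; first by apply/cvg_ex; exists (f 0).
near=> x.
apply: (@Mon_nincr f x h).
- exact: (Mon_weak _ Mf).
- near: x; exact: nbhs_right_gt.
- near: x; exact: nbhs_right_le.
Unshelve. all: by end_near.
Qed.

Section Box.
Variables (d : nat) (B : {set 'I_d}) (hh : 'I_d -> R) (z : R).

Definition Eb f (T : {set 'I_d}) : R :=
  if [disjoint T & B]%B then f (z + \sum_(i in T) hh i) else 0.

Lemma sum_split (A : {set 'I_d}) j (F : {set 'I_d} -> R) : j \notin A ->
  \sum_(T : {set 'I_d} | T \subset j |: A) F T = \sum_(T : {set 'I_d} | T \subset A) (F T + F (j |: T)).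
Proof.
move=> jA; rewrite big_split /= (bigID (fun T : {set 'I_d} => j \in T)) /= addrC; congr (_ + _).
  apply: eq_bigl => T; apply/andP/idP => [[sub nj]|sub].
    apply/fintype.subsetP => x xT; have := fintype.subsetP sub x xT; rewrite !inE => /orP[/eqP xj|//].
    by move: nj; rewrite -xj xT.
  split; first exact: (fintype.subset_trans sub (finset.subsetU1 j A)).
  by apply/negP => jT; move: jA; rewrite (fintype.subsetP sub j jT).
rewrite (reindex_onto (fun T : {set 'I_d} => j |: T) (fun T : {set 'I_d} => T :\ j)) /=; last first.
  by move=> T /andP[_ jT]; rewrite finset.setD1K.
apply: eq_bigl => T; apply/idP/idP.
  move=> /andP[/andP[sub _] /eqP E]; apply/fintype.subsetP => x xT.
  have : x \in (j |: T) :\ j by rewrite E.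
  rewrite !inE => /andP[xj _]; have := fintype.subsetP sub x; rewrite !inE (negbTE xj) /=.
  by apply.
move=> sTA; have njT : j \notin T by apply/negP => jT; move: jA; rewrite (fintype.subsetP sTA j jT).
by rewrite (finset.setUS _ sTA) finset.setU11 finset.setU1K // eqxx.
Qed.

Lemma box : (forall i, 0 <= hh i) -> 0 <= z -> forall n (A : {set 'I_d}) (f : R -> R), #|A| = n -> Pm n f ->
  0 <= \sum_(T : {set 'I_d} | T \subset A) (-1) ^+ #|T| * Eb f T.
Proof.
move=> hh0 z0; elim => [|n IH] A f cA Pf.
  rewrite (cards0_eq cA) (eq_bigl (pred1 (finset.set0 : {set 'I_d}))); last by move=> T; rewrite finset.subset0.
  rewrite big_pred1_eq cards0 expr0 mul1r /Eb big_set0 addr0.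
  case: ifP => _ //; exact: Pm_ge0 Pf z0.
have : A != finset.set0 by apply/eqP => A0; move: cA; rewrite A0 cards0.
case/finset.set0Pn => j jA.
have cA' : #|A :\ j| = n by move: cA; rewrite (cardsD1 j) jA add1n => -[].
rewrite -(finset.setD1K jA) sum_split ?finset.setD11 //.
have njT : forall T : {set 'I_d}, T \subset A :\ j -> j \notin T.
  by move=> T sT; apply/negP => jT; have := fintype.subsetP sT j jT; rewrite finset.setD11.
have disjU : forall T : {set 'I_d}, [disjoint j |: T & B]%B = (j \notin B) && [disjoint T & B]%B.
  by move=> T; rewrite -!finset.setI_eq0 finset.setIUl finset.setU_eq0 finset.setI_eq0 disjoints1 finset.setI_eq0.
case jB : (j \in B).
  rewrite (eq_bigr (fun T : {set 'I_d} => (-1)^+#|T| * Eb f T)); first exact: IH (Pm_S Pf).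
  by move=> T sT; rewrite {2}/Eb disjU jB /= mulr0 addr0.
rewrite (eq_bigr (fun T : {set 'I_d} => (-1)^+#|T| * Eb (fun x => f x - f (x + hh j)) T)).
  by apply: IH => //; apply: Pm_delta.
move=> T sT; rewrite finset.cardsU1 (njT T sT) add1n exprS /Eb disjU jB /=.
case: ifP => _; last by rewrite !mulr0 addr0.
rewrite big_setU1 ?njT //=.
have -> : z + (hh j + \sum_(i in T) hh i) = z + \sum_(i in T) hh i + hh j by ring.
ring.
Qed.

End Box.

Section Gen.
Variables (phi : R -> \bar R) (p dp G : R -> R).
Hypothesis hphi0 : phi 0 = +oo%E.
Hypothesis hphip : forall x : R, 0 < x -> phi x = (p x)%:E.
Hypothesis hp1 : p 1 = 0.
Hypothesis hpd : forall x : R, 0 < x -> is_derive x 1 p (dp x).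
Hypothesis hdp : forall x : R, 0 < x < 1 -> dp x < 0.
Hypothesis hbig : forall t : R, 0 <= t -> exists2 x : R, 0 < x <= 1 & t <= p x.
Hypothesis hG : forall x : R, 0 < x < 1 -> G x = - (dp x)^-1.
Hypothesis hGM : forall n, Mon Dunit 1 n G.

Lemma p_cont (a b : R) : 0 < a -> {within `[a, b], continuous p}.
Proof.
move=> a0; apply: continuous_in_subspaceT => x; rewrite inE/= in_itv/= => /andP[ax _].
exact: is_derive_cont (hpd (lt_le_trans a0 ax)).
Qed.

Lemma pdec (x y : R) : 0 < x -> x < y -> y <= 1 -> p y < p x.
Proof.
move=> x0 xy y1.
have Hd : forall c, c \in `]x, y[ -> is_derive c 1 p (dp c).
  by move=> c; rewrite in_itv/= => /andP[xc _]; apply: hpd; exact: lt_trans xc.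
have [c] := @MVT R p dp x y xy Hd (@p_cont x y x0).
rewrite in_itv/= => /andP[xc cy] /eqP; rewrite subr_eq => /eqP ->.
rewrite -subr_lt0 addrK pmulr_llt0 ?subr_gt0 //; apply: hdp.
by rewrite (lt_trans x0 xc) (lt_le_trans cy y1).
Qed.

Lemma p_ge0 (x : R) : 0 < x <= 1 -> 0 <= p x.
Proof.
move=> /andP[x0]; rewrite le_eqVlt => /orP[/eqP ->|x1]; first by rewrite hp1.
by rewrite -hp1; apply/ltW/pdec.
Qed.

Lemma p_inj (x y : R) : 0 < x <= 1 -> 0 < y <= 1 -> p x = p y -> x = y.
Proof.
move=> /andP[x0 x1] /andP[y0 y1] E.
case: (ltgtP x y) => // [xy|yx].
  by have := pdec x0 xy y1; rewrite E ltxx.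
by have := pdec y0 yx x1; rewrite E ltxx.
Qed.

Definition psi (t : R) := phi_inv phi t%:E.

Lemma psiP (t : R) : 0 <= t -> 0 < psi t <= 1 /\ p (psi t) = t.
Proof.
move=> t0; have [x0 /andP[x00 x01] tx0] := hbig t0.
have [c cI pc] : exists2 c, c \in `[x0, 1] & p c = t.
  apply: IVT => //; first exact: p_cont.
  by rewrite hp1 ge_min le_max tx0 t0 orbT.
have [c0 c1] : 0 < c /\ c <= 1.
  by move: cI; rewrite in_itv/= => /andP[x0c ->]; split => //; exact: lt_le_trans x0c.
have : [set x : R | 0 <= x <= 1 /\ phi x = t%:E] (xget 0 [set x : R | 0 <= x <= 1 /\ phi x = t%:E]).
  by apply: xgetPex; exists c; split; [rewrite ltW | rewrite hphip // pc].
rewrite /psi /phi_inv; set y := xget _ _ => /= [[/andP[y0 y1] Hy]].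
have yp : 0 < y.
  by rewrite lt_def y0 andbT; apply/eqP => y00; move: Hy; rewrite y00 hphi0.
by split; [rewrite yp y1 | move: Hy; rewrite hphip // => -[]].
Qed.

Lemma phi_inv_oo : phi_inv phi +oo%E = 0.
Proof.
rewrite /phi_inv; case: xgetP => // x _ [/andP[x0 x1] Hx].
apply/eqP; rewrite eq_le x0 andbT leNgt; apply/negP => xp.
by move: Hx; rewrite hphip.
Qed.

Lemma phi_inv_phi (x : R) : 0 <= x <= 1 -> phi_inv phi (phi x) = x.
Proof.
move=> /andP[x0 x1]; move: x0; rewrite le_eqVlt => /orP[/eqP <-|xp].
  by rewrite hphi0 phi_inv_oo.
have hx : 0 < x <= 1 by rewrite xp x1.
rewrite hphip //; have [H1 H2] := psiP (p_ge0 hx).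
exact: p_inj H1 hx H2.
Qed.

Lemma psi_unit (t : R) : 0 < t -> 0 < psi t < 1.
Proof.
move=> t0; have [/andP[p0 p1] pt] := psiP (ltW t0).
rewrite p0 /= lt_neqAle p1 andbT; apply/eqP => E.
by move: pt; rewrite E hp1 => E0; move: t0; rewrite -E0 ltxx.
Qed.

Lemma psi0 : psi 0 = 1.
Proof.
have := @phi_inv_phi 1; rewrite ler01 lexx => /(_ isT).
by rewrite hphip ?ltr01 // hp1.
Qed.

Lemma psi_der (t : R) : 0 < t -> is_derive t 1 psi (- G (psi t)).
Proof.
move=> t0; have /andP[x0 x1] := psi_unit t0.
have [_ pt] := psiP (ltW t0).
set x := psi t in x0 x1 pt *.
have xin : x \in `]0, 1[ by rewrite in_itv/= x0 x1.
have Hn := near_in_itvoo xin.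
have Hc : {near x, cancel p psi}.
  near=> y.
  have : y \in `]0, 1[ by near: y.
  rewrite in_itv/= => /andP[y0 y1].
  by rewrite /psi -hphip // phi_inv_phi // ltW // ltW.
have Hpc : {near x, continuous p}.
  near=> y.
  have : y \in `]0, 1[ by near: y.
  rewrite in_itv/= => /andP[y0 y1].
  exact: is_derive_cont (hpd y0).
have dpn : dp x != 0 by rewrite lt_eqF // hdp // x0 x1.
have := is_derive_inverse Hc Hpc (hpd x0) dpn.
rewrite pt => H; apply: is_derive_val H _.
by rewrite hG ?x0 // opprK.
Unshelve. all: by end_near.
Qed.

Lemma Mon_psi n : Mon Dpos (-1) n psi.
Proof.
elim: n => [|n IH].
  by split => // t t0; have [/andP[/ltW ? _] _] := psiP (ltW t0).
split; first by move=> t t0; have [/andP[/ltW ? _] _] := psiP (ltW t0).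
exists (fun t => - G (psi t)); split; first by move=> t t0; exact: psi_der.
have -> : (fun t => -1 * - G (psi t)) = (fun t => G (psi t)).
  by apply: boolp.funext => t /=; rewrite mulN1r opprK.
apply: (@Mon_comp Dpos Dunit) => //.
by move=> t t0; exact: psi_unit.
Qed.

Lemma psi_rc0 : psi t @[t --> 0^'+] --> psi 0.
Proof.
rewrite psi0; apply/cvgrPdist_le => e e0.
pose e' := Num.min e (1/2).
have e'0 : 0 < e' by rewrite lt_min e0 divr_gt0 ?ltr01 ?ltr0n.
have e'2 : e' <= 1/2 by rewrite ge_min lexx orbT.
have y00 : 0 < 1 - e'.
  by rewrite subr_gt0 (le_lt_trans e'2) // ltr_pdivrMr ?ltr0n // mul1r ltr1n.
have y01 : 1 - e' < 1 by rewrite ltrBlDr ltrDl.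
have dpos : 0 < p (1 - e') by rewrite -hp1; apply: pdec.
near=> t.
have t0 : 0 < t by near: t; exact: nbhs_right_gt.
have td : t < p (1 - e') by near: t; exact: nbhs_right_lt.
have [/andP[q0 q1] qt] := psiP (ltW t0).
have yq : 1 - e' <= psi t.
  rewrite leNgt; apply/negP => qy.
  by have := pdec q0 qy (ltW y01); rewrite qt => /(lt_trans td); rewrite ltxx.
rewrite ger0_norm ?subr_ge0 //.
have : e' <= e by rewrite ge_min lexx.
move: yq; lra.
Unshelve. all: by end_near.
Qed.

Lemma Pm_psi n : Pm n psi.
Proof.
split; first exact: Mon_psi.
by split; [rewrite psi0 ler01 | exact: psi_rc0].
Qed.

Lemma phi_ge0 (x : R) : 0 <= x <= 1 -> (0 <= phi x)%E.
Proof.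
move=> /andP[x0 x1]; move: x0; rewrite le_eqVlt => /orP[/eqP <-|xp].
  by rewrite hphi0 leey.
by rewrite hphip // lee_fin p_ge0 // xp x1.
Qed.

Lemma sum_oo d (c : 'I_d -> R) i0 : (forall i, 0 <= c i <= 1) -> phi (c i0) = +oo%E ->
  (\sum_(i < d) phi (c i))%E = +oo%E.
Proof.
move=> Hc E; rewrite (bigD1 i0) //= E addye //.
have : (0 <= \sum_(i < d | i != i0) phi (c i))%E.
  by apply: sume_ge0 => i _; apply: phi_ge0.
by case: (\sum_(i < d | i != i0) phi (c i))%E.
Qed.

Lemma archC_ground d (u : 'I_d -> R) : in_unit_cube u -> (exists i, u i = 0) ->
  @archC R phi d u = 0.
Proof.
move=> Hu [i ui]; rewrite /archC (sum_oo (c:=u) (i0:=i)) //; first exact: phi_inv_oo.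
by rewrite ui.
Qed.

Lemma archC_margin d (u : 'I_d -> R) i : in_unit_cube u -> (forall j, j != i -> u j = 1) ->
  @archC R phi d u = u i.
Proof.
move=> Hu H1; rewrite /archC (bigD1 i) //= big1 ?adde0; first exact: phi_inv_phi.
by move=> j ji; rewrite H1 // hphip ?ltr01 // hp1.
Qed.

Lemma archC_vol d (a b : 'I_d -> R) : in_unit_cube a -> in_unit_cube b ->
  (forall i, a i <= b i) -> 0 <= @cvolume R d (@archC R phi d) a b.
Proof.
move=> Ha Hb ab.
have [[i bi]|] := pselect (exists i, b i = 0).
  rewrite /cvolume big1 // => S _; rewrite archC_ground ?mulr0 //.
    by move=> j; case: ifP => _; [exact: Hb | exact: Ha].
  exists i; case: ifP => // _; apply/eqP; rewrite eq_le.
  by have /andP[-> _] := Ha i; rewrite -bi ab.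
move=> nb.
have bpos : forall i, 0 < b i.
  move=> i; have /andP[b0 _] := Hb i; rewrite lt_def b0 andbT.
  by apply/eqP => E; apply: nb; exists i.
pose Bs : {set 'I_d} := [set i | a i == 0]%SET.
pose hh i := if a i == 0 then 0 else p (a i) - p (b i).
pose z := \sum_(i < d) p (b i).
have hh0 : forall i, 0 <= hh i.
  move=> i; rewrite /hh; case: eqP => // /eqP ai0.
  have /andP[a0 _] := Ha i; have ap : 0 < a i by rewrite lt_def ai0 a0.
  have /andP[_ b1] := Hb i.
  rewrite subr_ge0; move: (ab i); rewrite le_eqVlt => /orP[/eqP ->|abi] //.
  exact/ltW/pdec.
have z0 : 0 <= z.
  by apply: sumr_ge0 => i _; apply: p_ge0; have /andP[_ ->] := Hb i; rewrite bpos.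
have := @box d Bs hh z hh0 z0 d [set: 'I_d]%SET psi.
rewrite cardsT card_ord => /(_ erefl (Pm_psi d)).
rewrite (eq_bigl xpredT); last by move=> T; rewrite finset.subsetT.
rewrite /cvolume (reindex_inj (@finset.setC_inj 'I_d)) /=.
move=> H; apply: (le_trans H) => {H}; rewrite le_eqVlt; apply/orP; left; apply/eqP.
apply: eq_bigr => T _.
have -> : (d - #|T| = #|~: T|)%N.
  by have := cardsC T; rewrite card_ord; lia.
congr (_ * _).
have inU : forall i, (i \in ~: T) = (i \notin T) by move=> i; rewrite finset.in_setC.
set U := ~: T in inU *.
rewrite /Eb /archC.
set c := fun i => if i \in T then b i else a i.
have cI : forall i, 0 <= c i <= 1 by move=> i; rewrite /c; case: ifP.
case: ifP => disj.
  have cp : forall i, 0 < c i.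
    move=> i; rewrite /c; case: ifP => iT //.
    have iU : i \in U by rewrite inU iT.
    have := disjointFr disj iU; rewrite /Bs finset.inE => /negbT ai0.
    by have /andP[a0 _] := Ha i; rewrite lt_def ai0 a0.
  rewrite (eq_bigr (fun i => (p (c i))%:E)); last by move=> i _; apply: hphip; apply: cp.
  rewrite sumEFin /psi; congr (phi_inv phi (_%:E)).
  rewrite /z [X in _ + X]big_mkcond /= -big_split /=; apply: eq_bigr => i _.
  rewrite /c /hh inU; case: (boolP (i \in T)) => iT /=; first by rewrite addr0.
  have iU : i \in U by rewrite inU iT.
  have := disjointFr disj iU; rewrite /Bs finset.inE => ->; ring.
have : ~~ [disjoint U & Bs]%B by rewrite disj.
rewrite -finset.setI_eq0 => /finset.set0Pn [i]; rewrite finset.inE => /andP[iU iB].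
rewrite (sum_oo (c:=c) (i0:=i)) //; first by rewrite phi_inv_oo.
move: iU iB; rewrite inU /Bs finset.inE /c => /negbTE -> /eqP ->.
exact: hphi0.
Qed.

Lemma archC_copula d : @is_copula R d (@archC R phi d).
Proof.
split.
- exact: archC_ground.
- exact: archC_margin.
- exact: archC_vol.
Qed.

End Gen.

Lemma copula_m1 d : @is_copula R d (@archC R (@phi_m1 R) d).
Proof.
apply: (@archC_copula _ (fun x => x - 1 - ln x) (fun x => 1 - x^-1)
   (fun x => x * (1 - x)^-1)).
- by rewrite /phi_m1 eqxx.
- by move=> x x0; rewrite /phi_m1 gt_eqF.
- by rewrite ln1 subrr subr0.
- move=> x x0.
  have H1 : is_derive x 1 (fun y : R => y - 1) (1 - 0).
    exact: (is_deriveB (@is_derive_id R R x 1) (@is_derive_cst R R R 1 x 1)).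
  apply: is_derive_val (is_deriveB H1 (is_derive1_ln x0)) _.
  by rewrite subr0.
- move=> x /andP[x0 x1]; rewrite subr_lt0 invf_gt1 //.
- move=> t t0; exists (expR (- (t + 1))).
    by rewrite expR_gt0 expR_le1 oppr_le0 addr_ge0.
  rewrite expRK; have := expR_gt0 (- (t + 1)); lra.
- move=> x /andP[x0 x1].
  have x0' : x != 0 by rewrite gt_eqF.
  have x1' : 1 - x != 0 by rewrite subr_eq0 eq_sym lt_eqF.
  have x2 : 1 - x^-1 != 0.
    by rewrite subr_eq0 eq_sym; apply/negP => /eqP/(f_equal GRing.inv); rewrite invrK invr1 => E; move: x1'; rewrite E subrr eqxx.
  field; rewrite x0' x1' andbT /=; rewrite subr_eq0; apply/eqP => E; by move: x1; rewrite E ltxx.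
- move=> n; have Hid : Mon Dunit 1 n (fun x => x) by apply: Mon_id => x /andP[/ltW].
  exact: (Mon_mul Hid (Mon_q n)).
Qed.


Lemma copula_m2 d : @is_copula R d (@archC R (@phi_m2 R) d).
Proof.
apply: (@archC_copula _ (fun x => (x^-1 + x - 2) / 2) (fun x => (1 - (x ^+ 2)^-1) / 2)
   (fun x => 2 * (x * x * (1 - x * x)^-1))).
- by rewrite /phi_m2 eqxx.
- by move=> x x0; rewrite /phi_m2 gt_eqF.
- by rewrite invr1; lra.
- move=> x x0.
  have x0' : x != 0 by rewrite gt_eqF.
  have H1 := @is_deriveV R (fun y => y) x 1 1 x0' (@is_derive_id R R x 1).
  have H2 := is_deriveD H1 (@is_derive_id R R x 1).
  have H3 := is_deriveB H2 (@is_derive_cst R R R 2 x 1).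
  have H4 := is_deriveM H3 (@is_derive_cst R R R (2^-1) x 1).
  apply: is_derive_val H4 _.
  rewrite /GRing.scale /=; field; exact: x0'.
- move=> x /andP[x0 x1].
  rewrite pmulr_llt0 ?invr_gt0 ?ltr0n // subr_lt0 invf_gt1 ?exprn_gt0 //.
  rewrite expr2; nra.
- move=> t t0; exists (2 * t + 3)^-1.
    have h : 0 < 2 * t + 3 by lra.
    by rewrite invr_gt0 h invf_le1 //=; lra.
  have h : 0 < 2 * t + 3 by lra.
  rewrite invrK; have := invr_gt0 (2 * t + 3); rewrite h => /= ?; lra.
- move=> x /andP[x0 x1].
  have x0' : x != 0 by rewrite gt_eqF.
  have x1' : 1 - x * x != 0 by rewrite subr_eq0 eq_sym lt_eqF //; nra.
  have x2 : 1 - x * x = - (x * x) * (1 - (x ^+ 2)^-1).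
    by rewrite expr2; field.
  have x3 : 1 - (x ^+ 2)^-1 != 0.
    by apply/eqP => E; move: x1'; rewrite x2 E mulr0 eqxx.
  by field; rewrite x0' x1' andbT /= expr2 -oppr_eq0 opprB.
- move=> n; have Hid : Mon Dunit 1 n (fun x => x) by apply: Mon_id => x /andP[/ltW].
  have Hsq := Mon_mul Hid Hid.
  have Hc : Mon Dunit 1 n (fun x => (1 - x * x)^-1).
    apply: (Mon_comp (E := Dunit) (g := fun y => (1 - y)^-1) (h := fun x => x * x)) => //.
      by move=> x /andP[x0 x1]; rewrite /Dunit mulr_gt0 //=; nra.
    exact: Mon_q.
  exact: (Mon_mul (Mon_cst _ _ _ (ler0n _ 2)) (Mon_mul Hsq Hc)).
Qed.

End Mon.

Theorem theorem7 (R : realType) (d : nat) :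
  (3 <= d)%N ->
  @is_copula R d (@archC R (@phi_m1 R) d) /\ @is_copula R d (@archC R (@phi_m2 R) d).
Proof.
move=> _; split; [exact: (@copula_m1 R d) | exact: (@copula_m2 R d)].
Qed.
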